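(* Let $m,n,d,P$ be positive integers with $P\ge mnd+n-1$, let $N_1,N_0,B$ be positive integers with $m\mid N_1$, $n\mid N_0$, $d\mid B$, and let $\bm{W}\in\mathbb{R}^{N_1\times N_0}$, $\bm{X}\in\mathbb{R}^{N_0\times B}$. Consider the Generalized PolyDot scheme for computing $\bm{S}=\bm{W}\bm{X}$ with $P$ nodes defined in the context. Then the recovery threshold of this scheme is $mnd+n-1$: from the computed outputs $\widetilde{\bm{S}}_p$ of any $mnd+n-1$ of the $P$ nodes, the whole product $\bm{S}=\bm{W}\bm{X}$ can be recovered. Consequently, the scheme tolerates up to $P-mnd-n+1$ erasures.
   Context: Block-partition $\bm{W}$ into an $m\times n$ grid of blocks $\bm{W}_{i,j}\in\mathbb{R}^{(N_1/m)\times(N_0/n)}$ and $\bm{X}$ into an $n\times d$ grid of blocks $\bm{X}_{j,k}\in\mathbb{R}^{(N_0/n)\times(B/d)}$, so that $\bm{S}=\bm{W}\bm{X}$ has an $m\times d$ grid of blocks $\bm{S}_{i,k}=\sum_{j=0}^{n-1}\bm{W}_{i,j}\bm{X}_{j,k}$. Define $\widetilde{\bm{W}}(u,v)=\sum_{i=0}^{m-1}\sum_{j=0}^{n-1}\bm{W}_{i,j}u^iv^j$ and $\widetilde{\bm{X}}(v,w)=\sum_{j=0}^{n-1}\sum_{k=0}^{d-1}\bm{X}_{j,k}v^{n-1-j}w^k$. Choose $P$ distinct real numbers $b_0,\dots,b_{P-1}$ and set $a_p=b_p^{\,n}$, $c_p=b_p^{\,mn}$. Node $p$ stores only $\widetilde{\bm{W}}(a_p,b_p)$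 (an $\frac{N_1}{m}\times\frac{N_0}{n}$ matrix) and $\widetilde{\bm{X}}(b_p,c_p)$ (an $\frac{N_0}{n}\times\frac{B}{d}$ matrix) and computes $\widetilde{\bm{S}}_p=\widetilde{\bm{W}}(a_p,b_p)\widetilde{\bm{X}}(b_p,c_p)$. The recovery threshold is the number of node outputs, out of $P$, that a decoder needs (from any subset of nodes of that size) to recover $\bm{S}$. *)

(* Defs.v *)
From mathcomp Require Import all_boot all_order all_algebra.
Set Implicit Arguments. Unset Strict Implicit. Unset Printing Implicit Defensive.
Import GRing.Theory Num.Theory.
Local Open Scope ring_scope.

Definition mxentry (R : nzRingType) (p q : nat) (A : 'M[R]_(p, q)) (i j : nat) : R :=
  match (insub i : option 'I_p), (insub j : option 'I_q) with
  | Some i', Some j' => A i' j'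
  | _, _ => 0
  end.

(* Block (i,j) of A : 'M_(p,q) partitioned into an a x b grid of blocks
   of size (p %/ a) x (q %/ b). *)
Definition mxblock_at (R : nzRingType) (p q a b : nat) (A : 'M[R]_(p, q)) (i j : nat)
  : 'M[R]_(p %/ a, q %/ b) :=
  \matrix_(r < p %/ a, c < q %/ b) mxentry A (i * (p %/ a) + r) (j * (q %/ b) + c).

Definition Wenc (R : nzRingType) (N1 N0 m n : nat) (W : 'M[R]_(N1, N0)) (u v : R)
  : 'M[R]_(N1 %/ m, N0 %/ n) :=
  \sum_(i < m) \sum_(j < n) (u ^+ i * v ^+ j) *: mxblock_at m n W i j.

Definition Xenc (R : nzRingType) (N0 B n d : nat) (X : 'M[R]_(N0, B)) (v w : R)
  : 'M[R]_(N0 %/ n, B %/ d) :=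
  \sum_(j < n) \sum_(k < d) (v ^+ (n - 1 - j) * w ^+ k) *: mxblock_at n d X j k.

Definition node_output (R : nzRingType) (N1 N0 B m n d : nat)
  (W : 'M[R]_(N1, N0)) (X : 'M[R]_(N0, B)) (bp : R) : 'M[R]_(N1 %/ m, B %/ d) :=
  Wenc m n W (bp ^+ n) bp *m Xenc n d X bp (bp ^+ (m * n)).

(* Main.v *)
From Stdlib Require Import ClassicalEpsilon.
Require Import Defs.
From mathcomp Require Import all_boot all_order all_algebra zify ring.
Import GRing.Theory Num.Theory.
Set Implicit Arguments. Unset Strict Implicit.
Local Open Scope ring_scope.

Definition pc (R : nzRingType) (N1 N0 B m n d : nat) (W : 'M[R]_(N1, N0)) (X : 'M[R]_(N0, B))
  (r : 'I_(N1 %/ m)) (c : 'I_(B %/ d)) : {poly R} :=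
  \sum_(i < m) \sum_(j < n) \sum_(j' < n) \sum_(k < d)
     ((mxblock_at m n W i j *m mxblock_at n d X j' k) r c) *: 'X^(n*i + j + (n-1-j') + m*n*k).

Arguments pc {R N1 N0 B} m n d W X r c.

Lemma node_pc (R : comNzRingType) (N1 N0 B m n d : nat) (W : 'M[R]_(N1, N0)) (X : 'M[R]_(N0, B))
  (r : 'I_(N1 %/ m)) (c : 'I_(B %/ d)) x :
  (node_output m n d W X x) r c = (pc m n d W X r c).[x].
Proof.
rewrite /node_output /Wenc /Xenc /pc mulmx_suml summxE horner_sum; apply: eq_bigr => i _.
rewrite mulmx_suml summxE horner_sum; apply: eq_bigr => j _.
rewrite mulmx_sumr summxE horner_sum; apply: eq_bigr => j' _.
rewrite mulmx_sumr summxE horner_sum; apply: eq_bigr => k _.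
rewrite -scalemxAl -scalemxAr !mxE hornerZ hornerXn.
rewrite !exprD -!exprM.
ring.
Qed.

Lemma mxentryE (R : nzRingType) p q (A : 'M[R]_(p, q)) (i : 'I_p) (j : 'I_q) :
  mxentry A i j = A i j.
Proof. by rewrite /mxentry !valK. Qed.

Lemma sum_split (R : nmodType) (F : nat -> R) N a q : N = (a * q)%N ->
  \sum_(l < N) F l = \sum_(j < a) \sum_(l < q) F (j * q + l)%N.
Proof.
move=> ->; elim: a => [|a IH]; first by rewrite mul0n !big_ord0.
rewrite big_ord_recr /= -IH mulSnr big_split_ord /=.
congr (_ + _); apply: eq_bigr => l _ //=; by rewrite addnC.
Qed.

Lemma block_mul (R : nzRingType) (N1 N0 B m n d : nat) (W : 'M[R]_(N1, N0)) (X : 'M[R]_(N0, B))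
  (i0 : 'I_m) (k0 : 'I_d) (r : 'I_(N1 %/ m)) (c : 'I_(B %/ d)) : (n %| N0)%N ->
  mxentry (W *m X) (i0 * (N1 %/ m) + r)%N (k0 * (B %/ d) + c)%N =
  \sum_(j < n) (mxblock_at m n W i0 j *m mxblock_at n d X j k0) r c.
Proof.
move=> hn.
have hr : (i0 * (N1 %/ m) + r < N1)%N.
  have := leq_trunc_div N1 m; have := leq_mul (ltn_ord i0) (leqnn (N1 %/ m)).
  have := ltn_ord r; rewrite mulSn; lia.
have hc : (k0 * (B %/ d) + c < B)%N.
  have := leq_trunc_div B d; have := leq_mul (ltn_ord k0) (leqnn (B %/ d)).
  have := ltn_ord c; rewrite mulSn; lia.
rewrite -[(i0 * _ + _)%N]/(val (Ordinal hr)) -[(k0 * _ + _)%N]/(val (Ordinal hc)).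
rewrite mxentryE mxE.
under eq_bigr => l _ do rewrite -[W _ l]mxentryE -[X l _]mxentryE.
rewrite (@sum_split _ (fun l => mxentry W (i0 * (N1 %/ m) + r) l * mxentry X l (k0 * (B %/ d) + c)) N0 n (N0 %/ n)); last by rewrite mulnC divnK.
apply: eq_bigr => j _; rewrite mxE; apply: eq_bigr => l _; by rewrite !mxE.
Qed.

Lemma expo_eq (m n i j j' k i0 k0 : nat) : (0 < n)%N -> (i < m)%N -> (i0 < m)%N -> (j < n)%N -> (j' < n)%N ->
  (n*i + j + (n-1-j') + m*n*k == n*i0 + (n-1) + m*n*k0)%N = [&& i == i0, j == j' & k == k0].
Proof.
move=> n0 im i0m jn j'n.
apply/eqP/and3P => [H|[/eqP-> /eqP-> /eqP->]]; last by lia.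
have ea : (n * (i + m*k) + (j + (n-1) - j') = n * (i0 + m*k0) + (n-1))%N by lia.
have aa : (i + m*k = i0 + m*k0)%N.
  case: (ltngtP (i + m*k) (i0 + m*k0)) => // h.
  - have := leq_mul (leqnn n) h; rewrite mulnS; lia.
  - have := leq_mul (leqnn n) h; rewrite mulnS; lia.
have kk : k = k0.
  case: (ltngtP k k0) => // h.
  - have := leq_mul (leqnn m) h; rewrite mulnS; lia.
  - have := leq_mul (leqnn m) h; rewrite mulnS; lia.
subst k0. split; apply/eqP; lia.
Qed.

Lemma expo_lt (m n d i j j' k : nat) : (i < m)%N -> (j < n)%N -> (j' < n)%N -> (k < d)%N ->
  (n*i + j + (n-1-j') + m*n*k < m*n*d + n - 1)%N.
Proof. move=> im jn j'n kd.
have := leq_mul (leqnn n) im; have := leq_mul (leqnn (m*n)) kd; rewrite !mulnS; lia. Qed.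

Lemma pc_coef (R : nzRingType) (N1 N0 B m n d : nat) (W : 'M[R]_(N1, N0)) (X : 'M[R]_(N0, B))
  (r : 'I_(N1 %/ m)) (c : 'I_(B %/ d)) (i0 : 'I_m) (k0 : 'I_d) : (0 < n)%N ->
  (pc m n d W X r c)`_(n*i0 + (n-1) + m*n*k0) =
  \sum_(j < n) (mxblock_at m n W i0 j *m mxblock_at n d X j k0) r c.
Proof.
move=> n0.
have E i j j' k : (n * i0 + (n - 1) + m * n * k0 == n * (@nat_of_ord m i) + (@nat_of_ord n j) + (n - 1 - (@nat_of_ord n j')) + m * n * (@nat_of_ord d k))%N = [&& i == i0, j == j' & k == k0].
  by rewrite eq_sym expo_eq.
rewrite /pc coef_sum (bigD1 i0) //= [X in _ + X]big1 ?addr0; last first.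
  move=> i /negbTE ne; rewrite coef_sum; apply: big1 => j _; rewrite coef_sum.
  apply: big1 => j' _; rewrite coef_sum; apply: big1 => k _.
  by rewrite coefZ coefXn E ne /= mulr0.
rewrite coef_sum; apply: eq_bigr => j _; rewrite coef_sum (bigD1 j) //= [X in _ + X]big1 ?addr0; last first.
  move=> j' /negbTE ne; rewrite coef_sum; apply: big1 => k _.
  by rewrite coefZ coefXn E eq_sym ne eqxx /= mulr0.
rewrite coef_sum (bigD1 k0) //= [X in _ + X]big1 ?addr0; last first.
  move=> k /negbTE ne.
  by rewrite coefZ coefXn E ne !eqxx /= mulr0.
by rewrite coefZ coefXn E !eqxx mulr1.
Qed.

Lemma pc_size (R : nzRingType) (N1 N0 B m n d : nat) (W : 'M[R]_(N1, N0)) (X : 'M[R]_(N0, B))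
  (r : 'I_(N1 %/ m)) (c : 'I_(B %/ d)) :
  (size (pc m n d W X r c) <= m*n*d + n - 1)%N.
Proof.
rewrite /pc; apply: (big_ind (fun p : {poly R} => size p <= m*n*d + n - 1)%N).
- by rewrite size_poly0.
- by move=> p q hp hq; rewrite (leq_trans (size_polyD _ _)) // geq_max hp hq.
move=> i _; apply: (big_ind (fun p : {poly R} => size p <= m*n*d + n - 1)%N).
- by rewrite size_poly0.
- by move=> p q hp hq; rewrite (leq_trans (size_polyD _ _)) // geq_max hp hq.
move=> j _; apply: (big_ind (fun p : {poly R} => size p <= m*n*d + n - 1)%N).
- by rewrite size_poly0.
- by move=> p q hp hq; rewrite (leq_trans (size_polyD _ _)) // geq_max hp hq.
move=> j' _; apply: (big_ind (fun p : {poly R} => size p <= m*n*d + n - 1)%N).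
- by rewrite size_poly0.
- by move=> p q hp hq; rewrite (leq_trans (size_polyD _ _)) // geq_max hp hq.
move=> k _; rewrite (leq_trans (size_scale_leq _ _)) // size_polyXn.
exact: expo_lt.
Qed.

Lemma uniq_prod (R : realFieldType) (m n d P N1 N0 B : nat) (hn : (0 < n)%N)
  (hmN1 : (m %| N1)%N) (hnN0 : (n %| N0)%N) (hdB : (d %| B)%N)
  (b : 'I_P -> R) (hb : injective b)
  (K : {set 'I_P}) (hK : #|K| = (m * n * d + n - 1)%N)
  (W W' : 'M[R]_(N1, N0)) (X X' : 'M[R]_(N0, B)) :
  {in K, forall p, node_output m n d W X (b p) = node_output m n d W' X' (b p)} ->
  W *m X = W' *m X'.
Proof.
move=> hag.
have pc_eq r c : pc m n d W X r c = pc m n d W' X' r c.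
  apply/eqP; rewrite -subr_eq0; apply/negPn/negP => hne.
  have := @max_poly_roots _ _ (map b (enum K)) hne.
  rewrite map_inj_uniq // enum_uniq size_map -cardE hK.
  have -> : all (root (pc m n d W X r c - pc m n d W' X' r c)) [seq b i | i <- enum K].
    apply/allP => y /mapP [s sK ->]; rewrite mem_enum in sK.
    by rewrite /root hornerD hornerN -!node_pc hag // subrr.
  move=> /(_ isT isT); apply/negP; rewrite -leqNgt.
  rewrite (leq_trans (size_polyD _ _)) // geq_max size_polyN !pc_size //.
apply/matrixP => rho ga.
set q1 := (N1 %/ m)%N; set q2 := (B %/ d)%N.
have eN1 : N1 = (m * q1)%N by rewrite mulnC divnK.
have eB : B = (d * q2)%N by rewrite mulnC divnK.
have q1p : (0 < q1)%N by move: (ltn_ord rho); rewrite {2}eN1; case: (q1) => //; rewrite muln0.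
have q2p : (0 < q2)%N by move: (ltn_ord ga); rewrite {2}eB; case: (q2) => //; rewrite muln0.
have hi : (rho %/ q1 < m)%N by rewrite ltn_divLR // -eN1.
have hk : (ga %/ q2 < d)%N by rewrite ltn_divLR // -eB.
have hr : (rho %% q1 < q1)%N by rewrite ltn_pmod.
have hc : (ga %% q2 < q2)%N by rewrite ltn_pmod.
have e1 (A : 'M[R]_(N1, B)) : A rho ga = mxentry A ((Ordinal hi) * q1 + (Ordinal hr : 'I_q1))%N ((Ordinal hk) * q2 + (Ordinal hc : 'I_q2))%N.
  by rewrite /= -!divn_eq mxentryE.
rewrite !e1 !(@block_mul _ _ _ _ _ n) // -!pc_coef //.
by rewrite pc_eq.
Qed.

Theorem theorem2 (R : realFieldType) (m n d P N1 N0 B : nat)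
  (hm : (0 < m)%N) (hn : (0 < n)%N) (hd : (0 < d)%N) (hP0 : (0 < P)%N)
  (hP : (m * n * d + n - 1 <= P)%N)
  (hN1 : (0 < N1)%N) (hN0 : (0 < N0)%N) (hB : (0 < B)%N)
  (hmN1 : (m %| N1)%N) (hnN0 : (n %| N0)%N) (hdB : (d %| B)%N)
  (b : 'I_P -> R) (hb : injective b)
  (K : {set 'I_P}) (hK : #|K| = (m * n * d + n - 1)%N) :
  exists D : ('I_P -> 'M[R]_(N1 %/ m, B %/ d)) -> 'M[R]_(N1, B),
    (forall f g : 'I_P -> 'M[R]_(N1 %/ m, B %/ d),
        {in K, forall p, f p = g p} -> D f = D g) /\
    (forall (W : 'M[R]_(N1, N0)) (X : 'M[R]_(N0, B)),
        D (fun p => node_output m n d W X (b p)) = W *m X).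
Proof.
pose Pr (f : 'I_P -> 'M[R]_(N1 %/ m, B %/ d)) (WX : 'M[R]_(N1, N0) * 'M[R]_(N0, B)) :=
  {in K, forall p, f p = node_output m n d WX.1 WX.2 (b p)}.
have U := uniq_prod hn hmN1 hnN0 hdB hb hK.
exists (fun f => match excluded_middle_informative (exists WX, Pr f WX) with
  | left h => let WX := proj1_sig (constructive_indefinite_description _ h) in WX.1 *m WX.2
  | right _ => 0 end).
split.
- move=> f g hfg.
  case: excluded_middle_informative => hf; case: excluded_middle_informative => hg //=.
  + case: constructive_indefinite_description => [[W X] /= HW].
    case: constructive_indefinite_description => [[W' X'] /= HW'].
    by apply: U => p pK; rewrite -HW // -HW' // hfg.
  + exfalso; apply: hg; case: hf => WX HW; exists WX => p pK; by rewrite -hfg // HW.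
  + exfalso; apply: hf; case: hg => WX HW; exists WX => p pK; by rewrite hfg // HW.
- move=> W X; case: excluded_middle_informative => h /=.
  + case: constructive_indefinite_description => [[W' X'] /= HW].
    by apply: U => p pK; rewrite -HW.
  + by exfalso; apply: h; exists (W, X).
Qed.
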